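(* Fix $n\ge 1$ and fixed vectors $\mathbf v_0,\dots,\mathbf v_{n+1}\in\mathbb R^d$. For every edge-factored scoring function $f_G:\mathbb R^d\times\mathbb R^d\to\mathbb R$ there exist arc-eager scoring functions $f_{\mathsf{sh}},f_{\mathsf{re}_\curvearrowleft},f_{\mathsf{ra}},f_{\mathsf{re}}:\mathbb R^d\times\mathbb R^d\to\mathbb R$ such that for every projective dependency tree $T$ on $w_0,\dots,w_n$ rooted at $w_0$, the arc-eager score of $T$ equals its edge-factored score $\sum_{(h,m)\in T} f_G(\mathbf v_h,\mathbf v_m)$. (That is, the arc-eager model contains the edge-factored model.)
   Context: Sentence $w_1,\dots,w_n$ with $w_0=\mathrm{ROOT}$ and $w_{n+1}$ an end-of-sentence marker; each position $i$ has a feature vector $\mathbf v_i\in\mathbb R^d$ (bi-LSTM outputs, treated as fixed). A dependency tree is a set of arcs $(h,m)$ (head $h$, modifier $m$). Its edge-factored score under $f_G$ is $\sum_{(h,m)}f_G(\mathbf v_h,\mathbf v_m)$. Arc-eager deduction system (items $[i^b,j]$ with $0\le i<j\le n+1$, $b\in\{0,1\}$; each item carries a score). Axiom: $[0^0,1]$ with score $0$. Rules: - sh: from $[i^b,j]:v$ with $j\le n$ derive $[j^0,j+1]:0$. - ra: from $[i^b,j]:v$ with $j\le n$ derive $[j^1,j+1]:0$. - $\mathsf{re}_\curvearrowleft$: from $[k^b,i]:v_1$ and $[i^0,j]:v_2$ derive $[k^b,j]:v_1+v_2+f_{\mathsf{sh}}(\mathbf v_k,\mathbf v_i)+f_{\mathsf{re}_\curvearrowleft}(\mathbf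 v_i,\mathbf v_j)$; this application adds the arc $(j,i)$ ($w_i$ left-modifies $w_j$). - re: from $[k^b,i]:v_1$ and $[i^1,j]:v_2$ derive $[k^b,j]:v_1+v_2+f_{\mathsf{ra}}(\mathbf v_k,\mathbf v_i)+f_{\mathsf{re}}(\mathbf v_i,\mathbf v_j)$; this application adds the arc $(k,i)$ ($w_i$ right-modifies $w_k$). Goal: $[0^0,n+1]$. A derivation of the goal encodes the dependency tree consisting of all arcs added by its $\mathsf{re}_\curvearrowleft$ and re applications, and its score is the score of the goal item computed by the rules. The arc-eager score of a tree $T$ is the maximum score over all goal derivations encoding $T$. *)

(* Defs.v *)
From Stdlib Require Import Reals List Arith.
From Stdlib Require Fin.
Import ListNotations.
Open Scope R_scope.

Definition vec (d : nat) : Type := Fin.t d -> R.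

(* Derivations in the arc-eager deduction system, for a sentence of length n.
   An inhabitant of [deriv n i b j] is a derivation of the item [i^b, j].
   The side conditions 0 <= i < j <= n+1 hold automatically for every
   derivable item. *)
Inductive deriv (n : nat) : nat -> bool -> nat -> Type :=
| dAx : deriv n 0 false 1
| dSh : forall i b j, deriv n i b j -> (j <= n)%nat -> deriv n j false (S j)
| dRa : forall i b j, deriv n i b j -> (j <= n)%nat -> deriv n j true (S j)
| dReL : forall k b i j, deriv n k b i -> deriv n i false j -> deriv n k b j
| dRe : forall k b i j, deriv n k b i -> deriv n i true j -> deriv n k b j.

Arguments dAx {n}.
Arguments dSh {n i b j} _ _.
Arguments dRa {n i b j} _ _.
Arguments dReL {n k b i j} _ _.
Arguments dRe {n k b i j} _ _.

Fixpoint ae_score {d n : nat} (v : nat -> vec d)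
  (fsh fla fra fre : vec d -> vec d -> R) {i b j} (D : deriv n i b j) : R :=
  match D with
  | dAx => 0
  | dSh _ _ => 0
  | dRa _ _ => 0
  | @dReL _ k _ i j D1 D2 =>
      ae_score v fsh fla fra fre D1 + ae_score v fsh fla fra fre D2
      + fsh (v k) (v i) + fla (v i) (v j)
  | @dRe _ k _ i j D1 D2 =>
      ae_score v fsh fla fra fre D1 + ae_score v fsh fla fra fre D2
      + fra (v k) (v i) + fre (v i) (v j)
  end.

Fixpoint arcs {n i b j} (D : deriv n i b j) : list (nat * nat) :=
  match D with
  | dAx => []
  | dSh D1 _ => arcs D1
  | dRa D1 _ => arcs D1
  | @dReL _ k _ i j D1 D2 => (j, i) :: arcs D1 ++ arcs D2
  | @dRe _ k _ i j D1 D2 => (k, i) :: arcs D1 ++ arcs D2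
  end.

(* Dependency trees on w_0..w_n rooted at w_0 are represented by a head
   function: the arc set is {(hd m, m) | 1 <= m <= n}. *)
Definition in_tree (n : nat) (hd : nat -> nat) (a : nat * nat) : Prop :=
  (1 <= snd a <= n)%nat /\ fst a = hd (snd a).

Inductive anc (n : nat) (hd : nat -> nat) (h : nat) : nat -> Prop :=
| anc_refl : anc n hd h h
| anc_step : forall k, (1 <= k <= n)%nat -> anc n hd h (hd k) -> anc n hd h k.

Definition proj_dep_tree (n : nat) (hd : nat -> nat) : Prop :=
  (forall m, (1 <= m <= n)%nat -> (hd m <= n)%nat /\ hd m <> m) /\
  (* every word is connected to the root w_0 (hence acyclic) *)
  (forall m, (1 <= m <= n)%nat -> anc n hd 0 m) /\
  (* projectivity: the head of every arc dominates all words strictly between *)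
  (forall m k, (1 <= m <= n)%nat ->
     ((hd m < k < m)%nat \/ (m < k < hd m)%nat) -> anc n hd (hd m) k).

Definition ef_score {d : nat} (n : nat) (v : nat -> vec d)
  (fG : vec d -> vec d -> R) (hd : nat -> nat) : R :=
  fold_right Rplus 0 (map (fun m => fG (v (hd m)) (v m)) (seq 1 n)).

Definition encodes {n : nat} (D : deriv n 0 false (S n)) (hd : nat -> nat) : Prop :=
  forall a, In a (arcs D) <-> in_tree n hd a.

(* s is the arc-eager score of the tree hd: the maximum score over goal
   derivations encoding hd (the maximum exists and equals s). *)
Definition is_ae_score {d : nat} (n : nat) (v : nat -> vec d)
  (fsh fla fra fre : vec d -> vec d -> R) (hd : nat -> nat) (s : R) : Prop :=
  (exists D : deriv n 0 false (S n), encodes D hd /\ ae_score v fsh fla fra fre D = s) /\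
  (forall D : deriv n 0 false (S n), encodes D hd -> ae_score v fsh fla fra fre D <= s).

(* Main.v *)
Require Import Defs.
From Stdlib Require Import Reals List Arith.
From Stdlib Require Import Lia Permutation Bool.
Import ListNotations.
Open Scope R_scope.

Fixpoint spine {n i b j} (D : deriv n i b j) : list (nat * nat) :=
  match D with
  | dAx => []
  | dSh _ _ => []
  | dRa _ _ => []
  | @dReL _ k _ i j D1 D2 => (j, i) :: spine D1 ++ spine D2
  | @dRe _ k _ i j D1 D2 => (k, i) :: spine D1 ++ spine D2
  end.

Lemma spine_incl : forall n i b j (D : deriv n i b j) a,
  In a (spine D) -> In a (arcs D).
Proof.
  intros n i b j D; induction D; simpl; intros a H; try tauto;
  (destruct H as [H|H]; [left; auto | right; apply in_app_or in H;
   apply in_or_app; destruct H; auto]).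
Qed.

Lemma deriv_lt : forall n i b j (D : deriv n i b j), (i < j)%nat.
Proof. intros n i b j D; induction D; lia. Qed.

Lemma sum_app : forall l1 l2 : list R,
  fold_right Rplus 0 (l1 ++ l2) = fold_right Rplus 0 l1 + fold_right Rplus 0 l2.
Proof. induction l1; intros; simpl; [ring | rewrite IHl1; ring]. Qed.

Lemma sum_perm : forall l1 l2 : list R, Permutation l1 l2 ->
  fold_right Rplus 0 l1 = fold_right Rplus 0 l2.
Proof.
  intros l1 l2 H; induction H; simpl; try ring.
  rewrite IHPermutation; ring. congruence.
Qed.

Lemma score_spine : forall d n (v : nat -> vec d) fG i b j (D : deriv n i b j),
  ae_score v (fun _ _ => 0) (fun x y => fG y x) fG (fun _ _ => 0) D =
  fold_right Rplus 0 (map (fun a => fG (v (fst a)) (v (snd a))) (spine D)).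
Proof.
  intros d n v fG i b j D; induction D; simpl; try reflexivity;
  rewrite map_app, sum_app, IHD1, IHD2; ring.
Qed.

Lemma spine_perm : forall n i b j (D : deriv n i b j),
  Permutation (map snd (spine D)) (seq (S i) (j - S i)).
Proof.
  intros n i b j D; induction D as [|i0 b0 j0 D IH Hle|i0 b0 j0 D IH Hle
    |k b0 i0 j0 D1 IH1 D2 IH2|k b0 i0 j0 D1 IH1 D2 IH2]; simpl.
  - constructor.
  - rewrite Nat.sub_diag; constructor.
  - rewrite Nat.sub_diag; constructor.
  - pose proof (deriv_lt _ _ _ _ D1); pose proof (deriv_lt _ _ _ _ D2).
    rewrite map_app.
    replace (j0 - S k)%nat with ((i0 - S k) + S (j0 - S i0))%nat by lia.
    rewrite seq_app. replace (S k + (i0 - S k))%nat with i0 by lia. simpl.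
    apply Permutation_trans with (map snd (spine D1) ++ i0 :: map snd (spine D2)).
    + apply Permutation_middle.
    + apply Permutation_app; [assumption | apply perm_skip; assumption].
  - pose proof (deriv_lt _ _ _ _ D1); pose proof (deriv_lt _ _ _ _ D2).
    rewrite map_app.
    replace (j0 - S k)%nat with ((i0 - S k) + S (j0 - S i0))%nat by lia.
    rewrite seq_app. replace (S k + (i0 - S k))%nat with i0 by lia. simpl.
    apply Permutation_trans with (map snd (spine D1) ++ i0 :: map snd (spine D2)).
    + apply Permutation_middle.
    + apply Permutation_app; [assumption | apply perm_skip; assumption].
Qed.

Lemma score_eq : forall d n (v : nat -> vec d) fG hd (D : deriv n 0 false (S n)),
  encodes D hd ->
  ae_score v (fun _ _ => 0) (fun x y => fG y x) fG (fun _ _ => 0) D =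
  ef_score n v fG hd.
Proof.
  intros d n v fG hd D HD. rewrite score_spine. unfold ef_score.
  replace (map (fun a => fG (v (fst a)) (v (snd a))) (spine D)) with
    (map (fun m => fG (v (hd m)) (v m)) (map snd (spine D))).
  - apply sum_perm, Permutation_map.
    pose proof (spine_perm _ _ _ _ D) as P. simpl in P.
    rewrite Nat.sub_0_r in P. exact P.
  - rewrite map_map. apply map_ext_in. intros [h m] Hin.
    apply spine_incl in Hin. apply HD in Hin. destruct Hin as [_ H2].
    simpl in *. subst. reflexivity.
Qed.

Lemma anc_trans : forall n hd a b c, anc n hd a b -> anc n hd b c -> anc n hd a c.
Proof.
  intros n hd a b c H1 H2; induction H2; auto. apply anc_step; auto.
Qed.

Lemma anc_inv : forall n hd a b, anc n hd a b -> a <> b -> anc n hd a (hd b).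
Proof. intros n hd a b H Hne; inversion H; subst; [contradiction | assumption]. Qed.

Lemma acyc : forall n hd, (forall m, (1 <= m <= n)%nat -> hd m <> m) ->
  forall x, anc n hd 0 x -> forall y, anc n hd y x -> anc n hd x y -> x = y.
Proof.
  intros n hd Hne x H; induction H as [|x Hx H IH]; intros y Hyx Hxy.
  - inversion Hyx; [reflexivity | lia].
  - destruct (Nat.eq_dec y x) as [->|Hn]; [reflexivity|]. exfalso.
    pose proof (anc_inv _ _ _ _ Hyx Hn) as H1.
    pose proof (anc_trans _ _ _ _ _ Hxy H1) as H2.
    assert (H3 : anc n hd (hd x) x) by (apply anc_step; [assumption | constructor]).
    apply (Hne x Hx). apply IH; assumption.
Qed.

Lemma ex_or_none : forall (p : nat -> bool) N,
  (exists m, (m < N)%nat /\ p m = true) \/ (forall m, (m < N)%nat -> p m = false).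
Proof.
  intros p N; induction N.
  - right; intros; lia.
  - destruct IHN as [[m [H1 H2]]|H].
    + left; exists m; split; [lia|auto].
    + destruct (p N) eqn:E.
      * left; exists N; split; [lia|auto].
      * right; intros m Hm. destruct (Nat.eq_dec m N); [subst; auto | apply H; lia].
Qed.

Lemma find_max : forall (p : nat -> bool) N, (exists m, (m < N)%nat /\ p m = true) ->
  exists m, (m < N)%nat /\ p m = true /\ forall m', (m < m' < N)%nat -> p m' = false.
Proof.
  intros p N; induction N; intros [m [H1 H2]]; [lia|].
  destruct (p N) eqn:E.
  - exists N; split; [lia|split; [auto|intros; lia]].
  - destruct IHN as [m0 [A [B C]]].
    + exists m; split; [|auto]. destruct (Nat.eq_dec m N); [subst; congruence|lia].
    + exists m0; split; [lia|split; [auto|]]. intros m' Hm'.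
      destruct (Nat.eq_dec m' N); [subst; auto | apply C; lia].
Qed.

Lemma find_min_aux : forall (p : nat -> bool) m,
  (exists m0, (m0 <= m)%nat /\ p m0 = true /\ forall m', (m' < m0)%nat -> p m' = false)
  \/ (forall m', (m' <= m)%nat -> p m' = false).
Proof.
  intros p m; induction m.
  - destruct (p 0%nat) eqn:E.
    + left; exists 0%nat; split; [lia|split; [auto|intros; lia]].
    + right; intros m' Hm'; replace m' with 0%nat by lia; auto.
  - destruct IHm as [[m0 [A [B C]]]|H].
    + left; exists m0; split; [lia|auto].
    + destruct (p (S m)) eqn:E.
      * left; exists (S m); split; [lia|split; [auto|intros; apply H; lia]].
      * right; intros m' Hm'. destruct (Nat.eq_dec m' (S m)); [subst; auto|apply H; lia].
Qed.

Lemma find_min : forall (p : nat -> bool) N, (exists m, (m < N)%nat /\ p m = true) ->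
  exists m, (m < N)%nat /\ p m = true /\ forall m', (m' < m)%nat -> p m' = false.
Proof.
  intros p N [m [H1 H2]]. destruct (find_min_aux p m) as [[m0 [A [B C]]]|H].
  - exists m0; split; [lia|auto].
  - rewrite H in H2; [discriminate|lia].
Qed.

Lemma anc0 : forall n hd, proj_dep_tree n hd -> forall x, (x <= n)%nat -> anc n hd 0 x.
Proof.
  intros n hd [_ [T2 _]] x Hx. destruct x; [constructor|apply T2; lia].
Qed.

Lemma split_ok : forall n hd, proj_dep_tree n hd -> forall k j,
  (S k < j)%nat -> (j <= S n)%nat ->
  (forall m, (k < m < j)%nat -> (k <= hd m <= j)%nat) ->
  exists i, (k < i < j)%nat /\ (hd i = k \/ hd i = j) /\
    (forall m, (k < m < i)%nat -> (k <= hd m <= i)%nat) /\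
    (forall m, (i < m < j)%nat -> (i <= hd m <= j)%nat).
Proof.
  intros n hd T k j Hkj Hj HP.
  pose proof T as [T1 [T2 T3]].
  assert (Hac : forall m y, (1 <= m <= n)%nat -> anc n hd y (hd m) -> anc n hd (hd m) y -> hd m = y).
  { intros m y Hm A B. apply (acyc n hd) with (x := hd m); auto.
    - intros m0 Hm0; apply T1; auto.
    - apply (anc0 n hd T). apply T1; auto. }
  set (p1 := fun m => Nat.eqb (hd m) k && Nat.ltb k m).
  set (p2 := fun m => Nat.eqb (hd m) j && Nat.ltb k m).
  destruct (ex_or_none p1 j) as [E1|N1].
  - destruct (find_max p1 j E1) as [i [Hi [Pi Ci]]].
    unfold p1 in Pi. apply andb_true_iff in Pi. destruct Pi as [Pa Pb].
    apply Nat.eqb_eq in Pa. apply Nat.ltb_lt in Pb.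
    exists i. split; [lia|]. split; [auto|]. split.
    + intros m Hm. specialize (HP m ltac:(lia)). split; [lia|].
      destruct (le_lt_dec (hd m) i) as [|Hlt]; auto. exfalso.
      assert (H1 : anc n hd (hd m) i) by (apply T3; lia).
      apply anc_inv in H1; [|lia]. rewrite Pa in H1.
      assert (H2 : anc n hd (hd i) m) by (apply T3; lia).
      rewrite Pa in H2. apply anc_inv in H2; [|lia].
      pose proof (Hac m k ltac:(lia) H2 H1). lia.
    + intros m Hm. specialize (HP m ltac:(lia)). split; [|lia].
      destruct (le_lt_dec i (hd m)) as [|Hlt]; auto. exfalso.
      destruct (Nat.eq_dec (hd m) k) as [Hk|Hk].
      * specialize (Ci m ltac:(lia)). unfold p1 in Ci. rewrite Hk, Nat.eqb_refl in Ci.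
        simpl in Ci. apply Nat.ltb_ge in Ci. lia.
      * assert (H1 : anc n hd (hd m) i) by (apply T3; lia).
        apply anc_inv in H1; [|lia]. rewrite Pa in H1.
        assert (H2 : anc n hd (hd i) (hd m)) by (apply T3; lia).
        rewrite Pa in H2.
        pose proof (Hac m k ltac:(lia) H2 H1). lia.
  - assert (N1' : forall m, (k < m < j)%nat -> hd m <> k).
    { intros m Hm E. specialize (N1 m ltac:(lia)). unfold p1 in N1.
      rewrite E, Nat.eqb_refl in N1. simpl in N1. apply Nat.ltb_ge in N1. lia. }
    destruct (ex_or_none p2 j) as [E2|N2].
    + destruct (find_min p2 j E2) as [i [Hi [Pi Ci]]].
      unfold p2 in Pi. apply andb_true_iff in Pi. destruct Pi as [Pa Pb].
      apply Nat.eqb_eq in Pa. apply Nat.ltb_lt in Pb.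
      exists i. split; [lia|]. split; [auto|]. split.
      * intros m Hm. specialize (HP m ltac:(lia)). split; [lia|].
        destruct (le_lt_dec (hd m) i) as [|Hlt]; auto. exfalso.
        destruct (Nat.eq_dec (hd m) j) as [Hk|Hk].
        -- specialize (Ci m ltac:(lia)). unfold p2 in Ci. rewrite Hk, Nat.eqb_refl in Ci.
           simpl in Ci. apply Nat.ltb_ge in Ci. lia.
        -- assert (H1 : anc n hd (hd m) i) by (apply T3; lia).
           apply anc_inv in H1; [|lia]. rewrite Pa in H1.
           assert (H2 : anc n hd (hd i) (hd m)) by (apply T3; lia).
           rewrite Pa in H2.
           pose proof (Hac m j ltac:(lia) H2 H1). lia.
      * intros m Hm. specialize (HP m ltac:(lia)). split; [|lia].
        destruct (le_lt_dec i (hd m)) as [|Hlt]; auto. exfalso.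
        pose proof (N1' m ltac:(lia)).
        assert (H1 : anc n hd (hd m) i) by (apply T3; lia).
        apply anc_inv in H1; [|lia]. rewrite Pa in H1.
        assert (H2 : anc n hd (hd i) m) by (apply T3; lia).
        rewrite Pa in H2. apply anc_inv in H2; [|lia].
        pose proof (Hac m j ltac:(lia) H2 H1). lia.
    + exfalso.
      assert (N2' : forall m, (k < m < j)%nat -> hd m <> j).
      { intros m Hm E. specialize (N2 m ltac:(lia)). unfold p2 in N2.
        rewrite E, Nat.eqb_refl in N2. simpl in N2. apply Nat.ltb_ge in N2. lia. }
      assert (A : forall x, anc n hd 0 x -> (k < x < j)%nat -> False).
      { intros x H; induction H as [|x Hx H IH]; intros Hr; [lia|].
        apply IH. pose proof (HP x Hr). pose proof (N1' x Hr). pose proof (N2' x Hr). lia. }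
      apply (A (S k)); [apply T2; lia | lia].
Qed.

Definition flag (hd : nat -> nat) (k : nat) : bool := Nat.ltb (hd k) k.

Lemma chain : forall n k, (1 <= k <= S n)%nat ->
  exists i b (D : deriv n i b k), arcs D = [].
Proof.
  intros n k; induction k; intros Hk; [lia|].
  destruct k.
  - exists 0%nat, false, dAx; reflexivity.
  - destruct IHk as [i [b [D HD]]]; [lia|].
    assert (Hle : (S k <= n)%nat) by lia.
    exists (S k), false, (dSh D Hle). simpl; exact HD.
Qed.

Lemma build : forall n hd, proj_dep_tree n hd -> forall len k j,
  (j - k <= len)%nat -> (k < j)%nat -> (j <= S n)%nat ->
  (forall m, (k < m < j)%nat -> (k <= hd m <= j)%nat) ->
  exists D : deriv n k (flag hd k) j,
    (forall a, In a (arcs D) -> in_tree n hd a) /\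
    (forall m, (k < m < j)%nat -> In (hd m, m) (arcs D)).
Proof.
  intros n hd T len; induction len; intros k j Hlen Hkj Hj HP; [lia|].
  destruct (Nat.eq_dec j (S k)) as [->|Hne].
  - destruct k.
    + exists dAx. split; intros; simpl in *; [tauto|lia].
    + destruct (chain n (S k)) as [i [b [D HD]]]; [lia|].
      assert (Hle : (S k <= n)%nat) by lia.
      destruct (flag hd (S k)).
      * exists (dRa D Hle). split; intros; simpl in *; [rewrite HD in *; simpl in *; tauto|lia].
      * exists (dSh D Hle). split; intros; simpl in *; [rewrite HD in *; simpl in *; tauto|lia].
  - destruct (split_ok n hd T k j ltac:(lia) Hj HP) as [i [Hi [Hhd [HP1 HP2]]]].
    destruct (IHlen k i ltac:(lia) ltac:(lia) ltac:(lia) HP1) as [D1 [A1 B1]].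
    destruct (IHlen i j ltac:(lia) ltac:(lia) ltac:(lia) HP2) as [D2 [A2 B2]].
    destruct Hhd as [Hhk|Hhj].
    + assert (Ef : flag hd i = true) by (unfold flag; apply Nat.ltb_lt; lia).
      revert D2 A2 B2. rewrite Ef. intros D2 A2 B2.
      exists (dRe D1 D2). split.
      * intros a Ha; simpl in Ha. destruct Ha as [<-|Ha].
        -- unfold in_tree; simpl; split; [lia|auto].
        -- apply in_app_or in Ha; destruct Ha; auto.
      * intros m Hm. simpl.
        destruct (lt_eq_lt_dec m i) as [[Hlt|Heq]|Hgt].
        -- right; apply in_or_app; left; apply B1; lia.
        -- left; subst m; rewrite Hhk; reflexivity.
        -- right; apply in_or_app; right; apply B2; lia.
    + assert (Ef : flag hd i = false) by (unfold flag; apply Nat.ltb_ge; lia).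
      revert D2 A2 B2. rewrite Ef. intros D2 A2 B2.
      exists (dReL D1 D2). split.
      * intros a Ha; simpl in Ha. destruct Ha as [<-|Ha].
        -- unfold in_tree; simpl; split; [lia|auto].
        -- apply in_app_or in Ha; destruct Ha; auto.
      * intros m Hm. simpl.
        destruct (lt_eq_lt_dec m i) as [[Hlt|Heq]|Hgt].
        -- right; apply in_or_app; left; apply B1; lia.
        -- left; subst m; rewrite Hhj; reflexivity.
        -- right; apply in_or_app; right; apply B2; lia.
Qed.

Theorem lemma1 :
  forall (d n : nat) (v : nat -> vec d), (1 <= n)%nat ->
  forall fG : vec d -> vec d -> R,
  exists fsh fla fra fre : vec d -> vec d -> R,
  forall hd : nat -> nat, proj_dep_tree n hd ->
    is_ae_score n v fsh fla fra fre hd (ef_score n v fG hd).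
Proof.
  intros d n v Hn fG.
  exists (fun _ _ => 0), (fun x y => fG y x), fG, (fun _ _ => 0).
  intros hd T. split.
  - destruct (build n hd T (S n) 0 (S n)) as [D [A B]]; try lia.
    { intros m Hm. destruct T as [T1 _]. specialize (T1 m ltac:(lia)). lia. }
    exists D. split.
    + intros a; split; [apply A|]. intros [H1 H2]. destruct a as [h m].
      simpl in *. subst. apply B. lia.
    + apply score_eq. intros a; split; [apply A|]. intros [H1 H2]. destruct a as [h m].
      simpl in *. subst. apply B. lia.
  - intros D HD. right. apply score_eq. exact HD.
Qed.
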